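(* Let $(\Omega,F,\mathbf P)$ be a non-trivial probability space and let $\psi\colon[1,\infty)\to(0,\infty)$ be a finite, continuous, strictly increasing function with $\psi(1)=\inf_{p\ge1}\psi(p)=1$. Let $S\subset[1,\infty)$ be a Borel set with $1\in S$. For $p\ge1$ put $p^+[S](p)=\inf\{t\in S:\ t\ge p\}$ and $$Z[\psi,S]=\sup_{p\ge1}\frac{\psi(p^+[S](p))}{\psi(p)}.$$ Suppose $Z[\psi,S]<\infty$. Then for every measurable $f\colon\Omega\to\mathbb R$, $$\|f\|G^{(S)}\psi\le\|f\|G\psi\le Z[\psi,S]\,\|f\|G^{(S)}\psi,$$ where $$\|f\|G\psi=\sup_{p\ge1}\frac{|f|_p}{\psi(p)},\qquad \|f\|G^{(S)}\psi=\sup_{p\in S}\frac{|f|_p}{\psi(p)}.$$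
   Context: For a random variable $f$ on $(\Omega,F,\mathbf P)$, $|f|_p=\left(\mathbf E|f|^p\right)^{1/p}$ for $1\le p<\infty$ (possibly $+\infty$). The quantity $\|f\|G\psi$ is the Grand Lebesgue Space norm with generating function $\psi$, and $\|f\|G^{(S)}\psi$ is the restricted Grand Lebesgue Space norm. *)

(* Defs.v *)
From mathcomp Require Import all_boot all_order all_algebra.
From mathcomp Require Import all_classical all_reals all_analysis.
Set Implicit Arguments. Unset Strict Implicit. Unset Printing Implicit Defensive.
Import Order.TTheory GRing.Theory Num.Theory.
Local Open Scope classical_set_scope.
Local Open Scope ring_scope.

Definition Lp_norm d (T : measurableType d) (R : realType)
  (P : probability T R) (p : R) (f : T -> R) : \bar R :=
  Lnorm P p%:E (EFin \o f).

Definition GLS_norm d (T : measurableType d) (R : realType)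
  (P : probability T R) (psi : R -> R) (f : T -> R) : \bar R :=
  ereal_sup [set (Lp_norm P p f * (psi p)^-1%:E)%E | p in `[1, +oo[%classic].

Definition GLS_norm_S d (T : measurableType d) (R : realType)
  (P : probability T R) (psi : R -> R) (S : set R) (f : T -> R) : \bar R :=
  ereal_sup [set (Lp_norm P p f * (psi p)^-1%:E)%E | p in S].

Definition pplus (R : realType) (S : set R) (p : R) : R :=
  inf [set t | S t /\ p <= t].

(* the ratio psi(p^+[S](p))/psi(p); by convention +oo when {t in S : t >= p}
   is empty (p^+ = +oo, psi(+oo) = +oo) *)
Definition Zratio (R : realType) (psi : R -> R) (S : set R) (p : R) : \bar R :=
  if pselect (exists t, S t /\ p <= t)
  then (psi (pplus S p) / psi p)%:E else +oo%E.

Definition Zconst (R : realType) (psi : R -> R) (S : set R) : \bar R :=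
  ereal_sup [set Zratio psi S p | p in `[1, +oo[%classic].

(* Main.v *)
Require Import Defs.
From mathcomp Require Import all_boot all_order all_algebra.
From mathcomp Require Import all_classical all_reals all_analysis.
Import Order.TTheory GRing.Theory Num.Theory numFieldNormedType.Exports.
Local Open Scope classical_set_scope.
Local Open Scope ring_scope.

Lemma contq (R : realType) (psi : R -> R) (q eps : R) :
  {within [set x : R | 1 <= x], continuous psi} -> 1 <= q -> 0 < eps ->
  exists2 del : R, 0 < del & forall t, 1 <= t -> `|q - t| < del -> `|psi q - psi t| < eps.
Proof.
move=> /subspace_continuousP /(_ q) cq q1 e0.
have := (cvgrPdist_lt _ _).1 (cq q1) eps e0.
rewrite near_withinE => -[del del0 H].
exists del => // t t1 qt; exact: (H t qt t1).
Qed.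
Lemma lyap d (T : measurableType d) (R : realType) (P : probability T R)
  (f : T -> R) (p t : R) : measurable_fun [set: T] f -> 1 <= p -> p <= t ->
  (Lp_norm P p f <= Lp_norm P t f)%E.
Proof.
move=> mf p1 pt.
have p0 : 0 < p by apply: lt_le_trans p1.
have t0 : 0 < t by apply: lt_le_trans pt.
have [<-//|ptn] := eqVneq p t.
have {ptn} pt : p < t by rewrite lt_neqAle ptn.
pose g x := `|f x| `^ p.
pose r := t / p.
pose q := t / (t - p).
have r0 : 0 < r by rewrite divr_gt0.
have tp0 : 0 < t - p by rewrite subr_gt0.
have q0 : 0 < q by rewrite divr_gt0.
have rq : r^-1 + q^-1 = 1.
  rewrite /r /q !invf_div -mulrDl addrC subrK divff //; exact: lt0r_neq0.
have mg : measurable_fun [set: T] g.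
  apply: (@measurableT_comp _ _ _ _ _ _ (@powR R ^~ p)) => //.
  exact: measurableT_comp.
have H := hoelder P mg (measurable_cst (1:R)) r0 q0 rq.
rewrite Lnorm1 Lnorm_cst1 in H. have P1 : ((P : {measure set T -> \bar R}) [set: T] = 1)%E by apply: probability_setT. rewrite P1 poweR1r mule1 in H.
rewrite /Lp_norm unlock /=.
rewrite unlock /= in H.
set A := (\int[P]_x _)%E in H *.
set B := (\int[P]_x _)%E.
set C := (\int[P]_x _)%E in H.
have AB : A = B.
  apply: eq_integral => x _; rewrite /g /= mulr1 ger0_norm ?powR_ge0 //.
have CB : C = (\int[P]_x (`|f x| `^ t)%:E)%E.
  apply: eq_integral => x _; rewrite /g /= ger0_norm ?powR_ge0 //.
  by rewrite -powRrM /r mulrCA divff ?mulr1 // lt0r_neq0.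
rewrite -AB -CB.
have A0 : (0 <= A)%E by apply: integral_ge0 => x _; rewrite lee_fin.
have C0 : (0 <= C)%E by apply: integral_ge0 => x _; rewrite lee_fin.
have pi0 : 0 <= p^-1 by rewrite invr_ge0 ltW.
have K := gt0_ler_poweR pi0.
have := K A (C `^ r^-1)%E.
rewrite !in_itv /= A0 poweR_ge0 !leey => /(_ isT isT H).
by rewrite -poweRrM /r invf_div mulrAC divff ?mul1r // lt0r_neq0.
Qed.

Theorem theorem1p1 (d : measure_display) (T : measurableType d) (R : realType)
  (P : probability T R) (psi : R -> R) (S : set R) :
  (exists A : set T, measurable A /\ (0 < P A)%E /\ (P A < 1)%E) ->
  (forall p, 1 <= p -> 0 < psi p) ->
  {within [set x : R | 1 <= x], continuous psi} ->
  (forall p q, 1 <= p -> p < q -> psi p < psi q) ->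
  psi 1 = 1 ->
  inf [set psi p | p in `[1, +oo[%classic] = 1 ->
  measurable S -> S `<=` `[1, +oo[%classic -> S 1 ->
  (Zconst psi S < +oo)%E ->
  forall f : T -> R, measurable_fun [set: T] f ->
    (GLS_norm_S P psi S f <= GLS_norm P psi f)%E /\
    (GLS_norm P psi f <= Zconst psi S * GLS_norm_S P psi S f)%E.
Proof.
move=> _ psi0 cpsi incr psi1 _ _ Ssub S1 Zfin f mf.
split.
  by apply: ereal_sup_le; apply: image_subset.
have Zge : forall p, 1 <= p -> (Zratio psi S p <= Zconst psi S)%E.
  move=> p p1; apply: ereal_sup_ubound; exists p => //.
  by rewrite /= in_itv /= andbT.
have Z1 : (1 <= Zconst psi S)%E.
  apply: le_trans (Zge 1 (lexx _)).
  rewrite /Zratio; case: pselect => [h|[]]; last by exists 1.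
  have -> : pplus S 1 = 1.
    apply/le_anti/andP; split.
      apply: (ge_inf (E := [set t | S t /\ 1 <= t])); first by exists 1 => t [].
      by split.
    by apply: lb_le_inf; [exists 1 | move=> t []].
  by rewrite psi1 divr1.
have N0 : (0 <= GLS_norm_S P psi S f)%E.
  apply: (@le_trans _ _ (Lp_norm P 1 f * (psi 1)^-1%:E)%E).
    apply: mule_ge0; first exact: Lnorm_ge0.
    by rewrite lee_fin invr_ge0 ltW // psi0.
  by apply: ereal_sup_ubound; exists 1.
have Z0 : (0 <= Zconst psi S)%E by apply: le_trans Z1.
have [Ny|Nfin] := eqVneq (GLS_norm_S P psi S f) +oo%E.
  by rewrite Ny gt0_muley ?leey // (lt_le_trans _ Z1) // lte_fin.
have Nf : GLS_norm_S P psi S f \is a fin_num by rewrite ge0_fin_numE // ltey.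
have Zf : Zconst psi S \is a fin_num by rewrite ge0_fin_numE.
rewrite -(fineK Nf) -(fineK Zf).
set n := fine (GLS_norm_S P psi S f).
set z := fine (Zconst psi S).
have n0 : 0 <= n by rewrite fine_ge0.
have Hn : forall t, S t -> (Lp_norm P t f * (psi t)^-1%:E <= n%:E)%E.
  by move=> t St; rewrite /n fineK //; apply: ereal_sup_ubound; exists t.
apply: ge_ereal_sup => _ [p p1 <-].
move: p1; rewrite /= in_itv /= andbT => p1.
have := Zge p p1; rewrite -(fineK Zf) -/z /Zratio.
case: pselect => [[t0 [St0 pt0]] Zp|h]; last by rewrite leye_eq.
rewrite lee_fin in Zp.
set E := [set t | S t /\ p <= t].
have hasl : has_lbound E by exists p => t [].
have ne : nonempty E by exists t0.
have pq : p <= pplus S p by apply: lb_le_inf => // t [].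
set q := pplus S p in pq Zp.
have q1 : 1 <= q by apply: le_trans pq.
have key : (Lp_norm P p f <= (n * psi q)%:E)%E.
  apply/lee_addgt0Pr => e e0.
  have n10 : 0 < n + 1 by rewrite ltr_wpDl.
  have e'0 : 0 < e / (n + 1) by rewrite divr_gt0.
  have [del del0 Hd] := @contq _ _ _ _ cpsi q1 e'0.
  have [t [St pt] tlt] := inf_adherent del0 (conj ne hasl).
  have qt : q <= t by apply: (ge_inf hasl).
  have t1 : 1 <= t by apply: le_trans pt.
  have Ht : (Lp_norm P t f <= (n * psi t)%:E)%E.
    have pst0 : (0 <= (psi t)%:E)%E by rewrite lee_fin ltW // psi0.
    have := lee_wpmul2r pst0 (Hn t St).
    rewrite -muleA -EFinM mulVf ?mule1; last by rewrite lt0r_neq0 // psi0.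
    by rewrite EFinM.
  have psit : psi t < psi q + e / (n + 1).
    have := Hd t t1; rewrite distrC ger0_norm ?subr_ge0 // ltrBlDl => /(_ tlt).
    have pqt : psi q <= psi t.
      move: qt; rewrite le_eqVlt => /predU1P[->|/(incr _ _ q1) /ltW //].
      by rewrite lexx.
    by rewrite distrC ger0_norm ?subr_ge0 // ltrBlDl.
  apply: (le_trans (lyap _ _ _ P f p t mf p1 pt)).
  apply: (le_trans Ht).
  rewrite -EFinD lee_fin.
  apply: (@le_trans _ _ (n * (psi q + e / (n + 1)))).
    by rewrite ler_wpM2l // ltW.
  rewrite mulrDr lerD2l mulrA ler_pdivrMr // mulrDr mulr1 [n * e]mulrC lerDl.
  by rewrite ltW.
have ppi : (0 <= ((psi p)^-1)%:E)%E by rewrite lee_fin invr_ge0 ltW // psi0.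
apply: (le_trans (lee_wpmul2r ppi key)).
rewrite -EFinM lee_fin -mulrA mulrC.
exact: ler_wpM2r.
Qed.
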